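(* Let $\mathbf T:=\mathbf T_0^{\otimes m}$, $\mathbf P\in\mathrm{Aut}(\mathbf T)$ and $\mathbf T_{\mathbf P}:=\mathbf P\mathbf T$. Then $$\mathrm{Aut}(\mathbf T_{\mathbf P})=\{\mathbf Q\in\mathrm{Aut}(\mathbf T):\mathbf Q\mathbf P=\mathbf P\mathbf Q\}.$$ Moreover, writing $\mathbf P=\mathbf P_\sigma$ with $\sigma\in\mathcal S_m$, one has $\mathrm{Aut}(\mathbf T_{\mathbf P})=\{\mathbf P_\tau:\tau\in\mathcal S_m,\ \tau\sigma=\sigma\tau\}$.
   Context: $\mathbf T_0=\begin{pmatrix}1&0\\1&1\end{pmatrix}$; rows/columns of $\mathbf T_0^{\otimes m}$ indexed by $x\in\{0,1\}^m$ via the Kronecker rule. For any matrix $\mathbf M$, $\mathrm{Aut}(\mathbf M)$ is the set of permutation matrices $\mathbf Q$ with $\mathbf Q^\top\mathbf M\mathbf Q=\mathbf M$. For $\sigma\in\mathcal S_m$, $\mathbf P_\sigma$ is the permutation matrix with $\mathbf P_\sigma\mathbf e_{(x_1,\dots,x_m)}=\mathbf e_{(x_{\sigma(1)},\dots,x_{\sigma(m)})}$; every element of $\mathrm{Aut}(\mathbf T)$ is of this form for a unique $\sigma$. *)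

(* Defs.v *)
From mathcomp Require Import all_boot all_order all_algebra all_fingroup.
Set Implicit Arguments. Unset Strict Implicit. Unset Printing Implicit Defensive.
Import GRing.Theory.
Local Open Scope ring_scope.

Definition T0 : 'M['F_2]_2 := \matrix_(a < 2, b < 2) ((b <= a)%N)%:R.

(* Kronecker rule: index i : 'I_(2^m) corresponds to x = (x_1,...,x_m) in {0,1}^m
   with i = sum_k x_k 2^(m-k), x_1 most significant.  bit i k = x_(k+1). *)
Definition bit (m : nat) (i : 'I_(2 ^ m)) (k : 'I_m) : bool :=
  odd (i %/ 2 ^ (m - k.+1)).

Definition bit2 (b : bool) : 'I_2 := if b then inord 1 else inord 0.

(* T = T_0^{(x) m}: entries of a Kronecker power are products of entries. *)
Definition Tm (m : nat) : 'M['F_2]_(2 ^ m) :=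
  \matrix_(i, j) \prod_(k < m) T0 (bit2 (bit i k)) (bit2 (bit j k)).

Definition isAut (n : nat) (M Q : 'M['F_2]_n) : Prop :=
  is_perm_mx Q /\ Q^T *m M *m Q = M.

(* P_sigma e_x = e_(x_sigma(1),...,x_sigma(m)): entry (y, x) is 1 iff
   y_k = x_(sigma k) for all k. *)
Definition Psig (m : nat) (s : 'S_m) : 'M['F_2]_(2 ^ m) :=
  \matrix_(i, j) ([forall k, bit i k == bit j (s k)])%:R.

(* Main.v *)
Require Import Defs.
From mathcomp Require Import all_boot all_order all_algebra all_fingroup.
From mathcomp Require Import zify.
Set Implicit Arguments. Unset Strict Implicit. Unset Printing Implicit Defensive.
Import GRing.Theory.
Local Open Scope ring_scope.

Lemma bits_inj (m i j : nat) : (i < 2 ^ m)%N -> (j < 2 ^ m)%N ->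
  (forall e, (e < m)%N -> odd (i %/ 2 ^ e) = odd (j %/ 2 ^ e)) -> i = j.
Proof.
elim: m i j => [|m IH] i j.
  by rewrite expn0 !ltnS !leqn0 => /eqP-> /eqP->.
move=> hi hj h.
rewrite {1}(divn_eq i 2) (divn_eq j 2) !modn2.
have h0 := h 0%N (ltn0Sn m). rewrite !expn0 !divn1 in h0. rewrite h0.
congr (_ * _ + _)%N.
apply: IH.
- by rewrite ltn_divLR // -expnSr.
- by rewrite ltn_divLR // -expnSr.
move=> e he. by rewrite -!divnMA -expnS; apply: h.
Qed.

Section Main.
Variable m : nat.
Local Notation n := (2 ^ m)%N.
Local Notation B := {set 'I_m}.

Definition vec (i : 'I_n) : B := [set k | bit i k].

Lemma vec_inj : injective vec.
Proof.
move=> i j /setP h; apply: val_inj; apply: (bits_inj (ltn_ord i) (ltn_ord j)) => e he.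
have hk : (m - e.+1 < m)%N by lia.
have := h (Ordinal hk); rewrite !inE /bit /=.
by have -> : (m - (m - e.+1).+1 = e)%N by lia.
Qed.

Lemma vec_onto (X : B) : exists i, vec i = X.
Proof.
have := @inj_card_onto _ _ vec vec_inj.
rewrite card_ord -cardsT -powersetT card_powerset cardsT card_ord leqnn.
by move=> /(_ isT X) /codomP [i ->]; exists i.
Qed.

Lemma n_gt0 : (0 < n)%N. Proof. by rewrite expn_gt0. Qed.

Definition idx (X : B) : 'I_n := odflt (Ordinal n_gt0) [pick i | vec i == X].

Lemma idxK : cancel idx vec.
Proof.
move=> X; rewrite /idx; case: pickP => [i /eqP //|].
by have [i hi] := vec_onto X => /(_ i); rewrite hi eqxx.
Qed.

Lemma vecK : cancel vec idx.
Proof. by move=> i; apply: vec_inj; rewrite idxK. Qed.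

Definition S (i j : 'I_n) : bool := vec j \subset vec i.

Lemma TmE i j : Tm m i j = (S i j)%:R.
Proof.
rewrite /Tm mxE /S.
have E k : T0 (bit2 (bit i k)) (bit2 (bit j k)) = (bit j k ==> bit i k)%:R.
  rewrite /T0 mxE /bit2.
  by case: (bit i k); case: (bit j k); rewrite /= ?inordK.
under eq_bigr do rewrite E.
case: (boolP (vec j \subset vec i)) => hs.
  apply: big1 => k _; move/subsetP: hs => /(_ k); rewrite !inE.
  by case: (bit j k) => //= ->.
have [k hk] : exists k, ~~ (bit j k ==> bit i k).
  apply/existsP; apply: contraNT hs => /existsPn h.
  by apply/subsetP => k; rewrite !inE; move: (h k); rewrite negbK => /implyP.
by rewrite (bigD1 k) //= (negbTE hk) mul0r.
Qed.


Lemma natbF2 (a b : bool) : (a%:R = b%:R :> 'F_2) <-> a = b.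
Proof.
by case: a; case: b; split=> // /eqP; rewrite ?oner_eq0 // eq_sym oner_eq0.
Qed.

Lemma permmxE (k : nat) (s : 'S_k) i j : (perm_mx s : 'M['F_2]_k) i j = (s i == j)%:R.
Proof. by rewrite /perm_mx !mxE. Qed.

Lemma perm_mx_inj (k : nat) (s t : 'S_k) :
  (perm_mx s : 'M['F_2]_k) = perm_mx t -> s = t.
Proof.
move=> h; apply/permP => i; have := congr1 (fun M : 'M['F_2]_k => M i (s i)) h.
by rewrite /= !permmxE eqxx => /natbF2 /esym /eqP ->.
Qed.

Lemma autP (k : nat) (M : 'M['F_2]_k) (s : 'S_k) :
  isAut M (perm_mx s) <-> forall i j, M (s i) (s j) = M i j.
Proof.
rewrite /isAut tr_perm_mx -row_permE.
have E : row_perm s^-1%g M *m perm_mx s = col_perm s^-1%g (row_perm s^-1%g M).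
  by rewrite col_permE invgK.
rewrite E; split.
  case=> _ /matrixP h i j; have := h (s i) (s j); by rewrite !mxE !permK.
move=> h; split; first exact: perm_mx_is_perm.
by apply/matrixP => i j; rewrite !mxE -{2}(permKV s i) -{2}(permKV s j) h.
Qed.

Definition AutT (r : 'S_n) := forall i j, S (r i) (r j) = S i j.

Lemma autT r : isAut (Tm m) (perm_mx r) <-> AutT r.
Proof.
rewrite autP; split=> h i j; first by have := h i j; rewrite !TmE => /natbF2.
by rewrite !TmE h.
Qed.

Lemma rowTE p i j : (perm_mx p *m Tm m) i j = Tm m (p i) j.
Proof. by rewrite -row_permE mxE. Qed.

Lemma autPT p r : isAut (perm_mx p *m Tm m) (perm_mx r) <->
  forall i j, S (p (r i)) (r j) = S (p i) j.
Proof.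
rewrite autP; split=> h i j.
  by have := h i j; rewrite !rowTE !TmE => /natbF2.
by rewrite !rowTE !TmE h.
Qed.

Lemma Srefl i : S i i. Proof. exact: subxx. Qed.
Lemma Strans i j k : S i j -> S j k -> S i k.
Proof. by rewrite /S => h1 h2; apply: subset_trans h2 h1. Qed.
Lemma Santi i j : S i j -> S j i -> i = j.
Proof. by rewrite /S => h1 h2; apply: vec_inj; apply/eqP; rewrite eqEsubset h1 h2. Qed.

Lemma part1 (p r : 'S_n) : (forall i j, S (p (r i)) (r j) = S (p i) j) <->
  AutT r /\ (r * p = p * r)%g.
Proof.
split.
  move=> h.
  have comm y : p (r y) = r (p y).
    apply: Santi; first by rewrite h Srefl.
    set x := r (p y).
    pose a := r^-1%g (p^-1%g x); pose b := r^-1%g (p (r y)).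
    have h1 : S (p a) (p y).
      by rewrite -h /a permKV permKV Srefl.
    have h2 : S (p y) b by rewrite -h /b permKV Srefl.
    have := h a b; rewrite (Strans h1 h2) /a /b !permKV => ->.
    done.
  split; last by apply/permP => y; rewrite !permM comm.
  move=> i j; have := h (p^-1%g i) j; by rewrite comm permKV.
case=> hr /permP e i j.
have := e i; rewrite !permM => ->; exact: hr.
Qed.

Definition act (t : 'S_m) (X : B) : B := [set l | t^-1%g l \in X].

Lemma act_sub t X Y : (act t X \subset act t Y) = (X \subset Y).
Proof.
apply/subsetP/subsetP => h k.
  by move=> hk; have := h (t k); rewrite !inE permK; apply.
by rewrite !inE; apply: h.
Qed.

Lemma act_inj t : injective (act t).
Proof. by move=> X Y h; apply/eqP; rewrite eqEsubset -(act_sub t X Y) -(act_sub t Y X) h subxx. Qed.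

Lemma idx_inj : injective idx. Proof. exact: can_inj idxK. Qed.

Definition psf (t : 'S_m) (i : 'I_n) : 'I_n := idx (act t (vec i)).
Lemma psf_inj t : injective (psf t).
Proof. by move=> i j /idx_inj /act_inj /vec_inj. Qed.
Definition ps t : 'S_n := perm (@psf_inj t).

Lemma PsigE s : Psig s = perm_mx (ps s).
Proof.
apply/matrixP => i j; rewrite permmxE /Psig mxE permE /psf.
congr (_ %:R); congr (nat_of_bool _).
rewrite -(inj_eq vec_inj) idxK.
apply/idP/eqP => [/forallP h|h].
  apply/setP => l; rewrite !inE; have := h (s^-1%g l); rewrite permKV.
  by move/eqP.
apply/forallP => k; move/setP: h => /(_ (s k)); rewrite !inE permK => ->.
by [].
Qed.

Lemma psM t s : ps (t * s)%g = (ps t * ps s)%g.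
Proof.
apply/permP => i; rewrite permM !permE /psf idxK; congr idx.
by apply/setP => l; rewrite !inE invMg permM.
Qed.

Lemma ps_inj : injective ps.
Proof.
move=> t t' h; apply/permP => k.
have := congr1 (fun s : 'S_n => s (idx [set k])) h.
rewrite /= !permE /psf idxK => /idx_inj /setP /(_ (t k)).
rewrite !inE permK eqxx => /esym /eqP e.
by rewrite -{2}e permKV.
Qed.

Lemma ps_aut t : AutT (ps t).
Proof. by move=> i j; rewrite /S !permE /psf !idxK act_sub. Qed.

Lemma classify r : AutT r -> exists t, r = ps t.
Proof.
move=> hr.
pose f X := vec (r (idx X)).
have fsub X Y : (f X \subset f Y) = (X \subset Y).
  by have := hr (idx Y) (idx X); rewrite /S !idxK.
have finj : injective f.
  by move=> X Y h; apply/eqP; rewrite eqEsubset -(fsub X Y) -(fsub Y X) h subxx.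
have fonto Y : f (vec (r^-1%g (idx Y))) = Y by rewrite /f vecK permKV idxK.
have f0 : f set0 = set0.
  apply/eqP; rewrite -subset0 -{2}(fonto set0) fsub; exact: sub0set.
have f1 k : exists l, f [set k] = [set l].
  have : f [set k] != set0.
    apply/eqP => e; have := set11 k; rewrite (finj _ _ (etrans e (esym f0))).
    by rewrite inE.
  case/set0Pn => l hl; exists l.
  have : [set l] \subset f [set k] by rewrite sub1set.
  rewrite -{1}(fonto [set l]) fsub subset1 => /orP [] /eqP e.
    by rewrite -e fonto.
  have := set11 l; by rewrite -{1}(fonto [set l]) e f0 inE.
pose tf k := odflt k [pick l | f [set k] == [set l]].
have tfE k : f [set k] = [set tf k].
  rewrite /tf; case: pickP => [l /eqP //|H]; have [l hl] := f1 k.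
  by move: (H l); rewrite hl eqxx.
have tf_inj : injective tf.
  by move=> k k' e; apply/set1_inj/finj; rewrite !tfE e.
exists (perm tf_inj); apply/permP => i; rewrite permE /psf.
apply: vec_inj; rewrite idxK.
have -> : vec (r i) = f (vec i) by rewrite /f vecK.
apply/setP => l; rewrite [in RHS]inE -sub1set.
have -> : [set l] = f [set (perm tf_inj)^-1%g l].
  by rewrite tfE -[tf _]permE permKV.
by rewrite fsub sub1set.
Qed.

End Main.

Lemma partA (m : nat) (P : 'M['F_2]_(2 ^ m)) :
  isAut (Tm m) P ->
  (forall Q : 'M['F_2]_(2 ^ m),
     isAut (P *m Tm m) Q <-> (isAut (Tm m) Q /\ Q *m P = P *m Q)).
Proof.
case=> /is_perm_mxP [p ->] _ Q; split.
  move=> hQ; have [/is_perm_mxP [r er] _] := hQ; subst Q.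
  move/autPT/part1: hQ => [hr e]; split; first exact/autT.
  by rewrite -!perm_mxM e.
case=> hQ e; have [/is_perm_mxP [r er] _] := hQ; subst Q.
move/autT: hQ => hr; rewrite -!perm_mxM in e; have e' := perm_mx_inj e.
by apply/(autPT p r); apply/part1; split.
Qed.

Theorem mainTheorem13 (m : nat) (P : 'M['F_2]_(2 ^ m)) :
  isAut (Tm m) P ->
  (forall Q : 'M['F_2]_(2 ^ m),
     isAut (P *m Tm m) Q <-> (isAut (Tm m) Q /\ Q *m P = P *m Q)) /\
  (forall sigma : 'S_m, P = Psig sigma ->
     forall Q : 'M['F_2]_(2 ^ m),
       isAut (P *m Tm m) Q <->
       exists tau : 'S_m, (tau * sigma = sigma * tau)%g /\ Q = Psig tau).
Proof.
move=> hP; split; first exact: partA.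
move=> s eP Q; rewrite (partA hP Q) eP PsigE; split.
  case=> hQ e; have [/is_perm_mxP [r er] _] := hQ; subst Q.
  move/autT: hQ => hr.
  have [t et] := classify hr; subst r.
  exists t; split; last by rewrite PsigE.
  apply: ps_inj; rewrite !psM; apply: perm_mx_inj; by rewrite !perm_mxM.
case=> t [e ->]; rewrite PsigE; split; first exact/autT/ps_aut.
by rewrite -!perm_mxM -!psM e.
Qed.
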